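(* Let $(\mathcal{X},d)$ be a finite metric space, $P$ a probability distribution on $\mathcal{X}$, $k\ge1$ an integer, $O\in\mathcal{X}_k$ an optimal $k$-RP solution, and $\rho\ge1$. Let $S\in\mathcal{X}_k$ be a $k$-multiset returned by a $\rho$-approximation algorithm for the uniform capacitated $k$-median objective, i.e., satisfying $d_W(D_S,P)\le \rho\cdot\min_{T\in\mathcal{X}_k} d_W(D_T,P)$. Then $$\mathbb{E}_{X\sim P_k}[d_k(S,X)]\le (\rho+2)\cdot \mathbb{E}_{X\sim P_k}[d_k(O,X)].$$
   Context: $\mathcal{X}_k$ is the set of multisets of exactly $k$ points of $\mathcal{X}$. For $U,V\in\mathcal{X}_k$, $d_k(U,V)$ is the minimum, over perfect matchings between the $k$ elements of $U$ and the $k$ elements of $V$ (with multiplicity), of the sum of the distances of matched pairs. $P_k$ is the distribution of the multiset of $k$ points drawn i.i.d. from $P$. The $k$-RP cost of $S\in\mathcal{X}_k$ is $\mathbb{E}_{X\sim P_k}[d_k(S,X)]$, and $O$ minimizes this cost. For $T\in\mathcal{X}_k$, $D_T$ is the probability distribution on $\mathcal{X}$ assigning to each $x$ its multiplicity in $T$ divided by $k$. $d_W$ denotes the Wasserstein-1 (earth mover's) distance between probability distributions on $(\mathcal{X},d)$. *)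

(* Defs.v *)
From HB Require Import structures.
From mathcomp Require Import all_boot all_order fingroup perm all_algebra.
From mathcomp Require Import classical_sets.
From mathcomp Require Import reals.
Set Implicit Arguments. Unset Strict Implicit. Unset Printing Implicit Defensive.
Import Order.TTheory GRing.Theory Num.Theory.
Local Open Scope ring_scope.
Local Open Scope classical_set_scope.

Definition is_metric (R : realType) (T : finType) (d : T -> T -> R) : Prop :=
  [/\ forall x y, 0 <= d x y,
      forall x y, d x y = 0 <-> x = y,
      forall x y, d x y = d y x &
      forall x y z, d x z <= d x y + d y z].

Definition is_prob (R : realType) (T : finType) (P : T -> R) : Prop :=
  (forall x, 0 <= P x) /\ \sum_(x : T) P x = 1.

(* A k-multiset of points is represented by a k-indexed family of points
   (only the multiset matters: everything below is permutation invariant). *)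
Definition kset (T : finType) (k : nat) := {ffun 'I_k -> T}.

Definition dk (R : realType) (T : finType) (d : T -> T -> R) (k : nat)
  (U V : kset T k) : R :=
  inf [set c : R | exists s : 'S_k, c = \sum_(i < k) d (U i) (V (s i))].

(* k-RP cost: E_{X ~ P_k}[d_k(S,X)], X = multiset of k i.i.d. draws from P *)
Definition kRP_cost (R : realType) (T : finType) (d : T -> T -> R) (P : T -> R)
  (k : nat) (S : kset T k) : R :=
  \sum_(X : kset T k) (\prod_(i < k) P (X i)) * dk d S X.

Definition Dk (R : realType) (T : finType) (k : nat) (U : kset T k) (x : T) : R :=
  (#|[set i : 'I_k | U i == x]%SET|%:R) / k%:R.

Definition coupling (R : realType) (T : finType) (mu nu : T -> R)
  (g : T -> T -> R) : Prop :=
  [/\ forall x y, 0 <= g x y,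
      forall x, \sum_(y : T) g x y = mu x &
      forall y, \sum_(x : T) g x y = nu y].

Definition dW (R : realType) (T : finType) (d : T -> T -> R) (mu nu : T -> R) : R :=
  inf [set c : R | exists g, coupling mu nu g /\
                     c = \sum_(x : T) \sum_(y : T) g x y * d x y].
Arguments Dk {R T k} U x.

(* Main.v *)
Require Import Defs.
From HB Require Import structures.
From mathcomp Require Import all_boot all_order fingroup perm all_algebra.
From mathcomp Require Import classical_sets.
From mathcomp Require Import reals.
From mathcomp Require Import zify ring lra.
Import Order.TTheory GRing.Theory Num.Theory.
Local Open Scope ring_scope.

Set Implicit Arguments. Unset Strict Implicit. Unset Printing Implicit Defensive.

Local Close Scope ring_scope.
Local Open Scope nat_scope.

Definition Nb (I J : finType) (E : I -> J -> bool) (A : {set I}) : {set J} :=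
  [set y | [exists x in A, E x y]].

Lemma hall (I J : finType) (j0 : J) (n : nat) : forall (E : I -> J -> bool) (X : {set I}),
  #|X| <= n ->
  (forall A : {set I}, A \subset X -> #|A| <= #|Nb E A|) ->
  exists f : I -> J, {in X, forall x, E x (f x)} /\ {in X &, injective f}.
Proof.
elim: n => [|n IH] E X hX hH.
  exists (fun _ => j0); have X0 : X = finset.set0 by apply/eqP; rewrite -cards_eq0; lia.
  by split=> x; rewrite X0 inE.
have [small|big] := leqP #|X| n; first exact: IH.
case: (boolP [exists A : {set I}, [&& A \proper X, A != finset.set0 & #|Nb E A| <= #|A|]]).
  case/existsP=> A /and3P [pAX nA0 cA].
  have sAX := proper_sub pAX.
  have cAX := proper_card pAX.
  have [f1 [f1E f1i]] : exists f : I -> J, {in A, forall x, E x (f x)} /\ {in A &, injective f}.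
    apply: IH; first lia.
    by move=> B sBA; apply: hH; apply: fintype.subset_trans sBA sAX.
  pose E2 x y := E x y && (y \notin Nb E A).
  have [f2 [f2E f2i]] : exists f : I -> J, {in X :\: A, forall x, E2 x (f x)} /\ {in X :\: A &, injective f}.
    apply: IH.
      rewrite cardsDS //.
      have : 0 < #|A| by rewrite card_gt0.
      lia.
    move=> B sB.
    have dAB : A :&: B = finset.set0.
      apply/setP=> z; rewrite !inE; apply/negbTE/negP=> /andP [zA zB].
      by move/fintype.subsetP: sB => /(_ z zB); rewrite !inE zA.
    have sABX : A :|: B \subset X.
      rewrite finset.subUset sAX /=; apply: fintype.subset_trans sB _; exact: subsetDl.
    have h1 := hH _ sABX.
    have h2 : #|A :|: B| = #|A| + #|B| by rewrite cardsU dAB cards0 subn0.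
    have h3 : Nb E (A :|: B) :\: Nb E A \subset Nb E2 B.
      apply/fintype.subsetP=> z; rewrite !inE => /andP [zn /existsP [w /andP [wAB Ewz]]].
      apply/existsP; exists w.
      move: wAB; rewrite inE => /orP [wA|wB].
        by move: zn; rewrite negb_exists => /forallP /(_ w); rewrite wA Ewz.
      by rewrite wB /E2 Ewz inE.
    have h4 := subset_leq_card h3.
    rewrite cardsD in h4.
    have h5 : #|Nb E (A :|: B) :&: Nb E A| <= #|Nb E A| by apply: subset_leq_card; apply: subsetIr.
    lia.
  exists (fun x => if x \in A then f1 x else f2 x); split.
    move=> x xX; case: ifP => xA; first exact: f1E.
    by have /andP [] := f2E x ltac:(by rewrite inE xA xX).
  move=> x y xX yX /=.
  case: ifP => xA; case: ifP => yA.
  - exact: f1i.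
  - move=> e; have /andP [_] := f2E y ltac:(by rewrite inE yA yX).
    rewrite -e inE; case/negP; apply/existsP; exists x; rewrite xA /=; exact: f1E.
  - move=> e; have /andP [_] := f2E x ltac:(by rewrite inE xA xX).
    rewrite e inE; case/negP; apply/existsP; exists y; rewrite yA /=; exact: f1E.
  - by apply: f2i; rewrite inE ?xA ?yA ?xX ?yX.
rewrite negb_exists => /forallP hA.
have : 0 < #|X| by lia.
rewrite card_gt0 => /set0Pn [x xX].
have : 0 < #|Nb E [set x]|.
  have := hH [set x]; rewrite cards1 finset.sub1set xX; move/(_ isT); lia.
rewrite card_gt0 => /set0Pn [y].
rewrite inE => /existsP [x' /andP [] ]; rewrite inE => /eqP -> Exy.
pose E1 a b := E a b && (b != y).
have [f1 [f1E f1i]] : exists f : I -> J, {in X :\ x, forall a, E1 a (f a)} /\ {in X :\ x &, injective f}.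
  apply: IH; first by move: big; have := cardsD1 x X; rewrite xX /=; lia.
  move=> B sB.
  have [->|nB0] := eqVneq B finset.set0; first by rewrite cards0.
  have pBX : B \proper X.
    rewrite finset.properEneq; apply/andP; split.
      apply/eqP => eBX; move/fintype.subsetP: sB => /(_ x); rewrite eBX xX !inE eqxx /=.
      by move/(_ isT).
    apply: fintype.subset_trans sB _; exact: subsetDl.
  have := hA B; rewrite pBX nB0 /= -ltnNge => hlt.
  have h3 : Nb E B :\ y \subset Nb E1 B.
    apply/fintype.subsetP=> z; rewrite !inE => /andP [zy /existsP [w /andP [wB Ewz]]].
    by apply/existsP; exists w; rewrite wB /E1 Ewz zy.
  have h4 := subset_leq_card h3.
  have h5 := cardsD1 y (Nb E B).
  case: (y \in Nb E B) h5 => /= h5; lia.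
exists (fun a => if a == x then y else f1 a); split.
  move=> a aX; case: eqP => [->//|/eqP ax].
  by have /andP [] := f1E a ltac:(by rewrite !inE ax aX).
move=> a b aX bX /=.
case: eqP => [->|/eqP ax]; case: eqP => [->|/eqP bx] //.
- move=> e; have /andP [_] := f1E b ltac:(by rewrite !inE bx bX).
  by rewrite -e eqxx.
- move=> e; have /andP [_] := f1E a ltac:(by rewrite !inE ax aX).
  by rewrite e eqxx.
- by apply: f1i; rewrite !inE ?ax ?bx ?aX ?bX.
Qed.

Local Close Scope nat_scope.
Local Open Scope ring_scope.

Definition supp (R : realFieldType) k (M : 'I_k -> 'I_k -> R) :=
  [set ij : 'I_k * 'I_k | M ij.1 ij.2 != 0].

Lemma birk (R : realFieldType) (k : nat) (j0 : 'I_k) (C : 'I_k -> 'I_k -> R) (n : nat) :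
  forall (M : 'I_k -> 'I_k -> R) (t : R),
  (#|supp M| <= n)%N ->
  (forall i j, 0 <= M i j) -> (forall i, \sum_j M i j = t) -> (forall j, \sum_i M i j = t) ->
  exists s : 'S_k, t * \sum_i C i (s i) <= \sum_i \sum_j M i j * C i j.
Proof.
elim: n => [|n IH] M t hn hM hr hc.
  exists 1%g; have M0 : forall i j, M i j = 0.
    move=> i j; apply/eqP; apply: contraT => nz.
    have : (i, j) \in supp M by rewrite inE.
    move=> hin; move: hn; rewrite leqn0 cards_eq0 => /eqP h0.
    by rewrite h0 inE in hin.
  have t0 : t = 0 by rewrite -(hr j0) big1 // => j _; rewrite M0.
  by rewrite t0 mul0r sumr_ge0 // => i _; rewrite big1 // => j _; rewrite M0 mul0r.
have tge0 : 0 <= t by rewrite -(hr j0) sumr_ge0.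
have [t0|tpos] := eqVneq t 0.
  have M0 : forall i j, M i j = 0.
    move=> i j; have := hr i; rewrite t0 => /eqP; rewrite psumr_eq0; last by move=> *; exact: hM.
    by move/allP => /(_ j (mem_index_enum _)) /eqP.
  exists 1%g; by rewrite t0 mul0r sumr_ge0 // => i _; rewrite big1 // => j _; rewrite M0 mul0r.
have tgt0 : 0 < t by rewrite lt_def tpos tge0.
pose E i j := M i j != 0.
have [f [fE fi]] : exists f : 'I_k -> 'I_k, {in [set: 'I_k], forall x, E x (f x)} /\ {in [set: 'I_k] &, injective f}.
  apply: (hall j0 (leqnn _)) => A _.
  have h1 : #|A|%:R * t = \sum_(i in A) \sum_(j in Nb E A) M i j.
    rewrite -sum1_card natr_sum mulr_suml; apply: eq_bigr => i iA.
    rewrite mul1r -(hr i) [RHS]big_mkcond /=; apply: eq_bigr => j _.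
    case: ifP => // /negbT jN; apply/eqP; apply: contraNT jN => nz.
    by rewrite inE; apply/existsP; exists i; rewrite iA.
  have h2 : \sum_(i in A) \sum_(j in Nb E A) M i j <= \sum_i \sum_(j in Nb E A) M i j.
    rewrite [leRHS](bigID (fun i => i \in A)) /= lerDl sumr_ge0 // => i _; exact: sumr_ge0.
  have h3 : \sum_i \sum_(j in Nb E A) M i j = #|Nb E A|%:R * t.
    rewrite exchange_big /= -sum1_card natr_sum mulr_suml; apply: eq_bigr => j _.
    by rewrite mul1r hc.
  have : #|A|%:R * t <= #|Nb E A|%:R * t :> R by rewrite h1 -h3.
  by rewrite ler_pM2r // ler_nat.
have finj : injective f by move=> x y; apply: fi; rewrite inE.
pose s := perm finj.
have sE : forall i, M i (s i) != 0 by move=> i; rewrite permE; exact: fE (finset.in_setT i).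
pose i0 := [arg min_(i < j0) M i (s i)]%O.
have hmin : forall i, M i0 (s i0) <= M i (s i).
  rewrite /i0; case: Order.TotalTheory.arg_minP => // i _ h j; exact: h.
pose lam := M i0 (s i0).
have lpos : 0 < lam by rewrite lt_def sE hM.
pose M' i j := M i j - (if j == s i then lam else 0).
have hM' : forall i j, 0 <= M' i j.
  move=> i j; rewrite /M'; case: eqP => [->|_]; last by rewrite subr0.
  by rewrite subr_ge0.
have sumite : forall i, \sum_j (if j == s i then lam else 0) = lam.
  by move=> i; rewrite -big_mkcond /= big_pred1_eq.
have hr' : forall i, \sum_j M' i j = t - lam.
  by move=> i; rewrite /M' sumrB hr sumite.
have hc' : forall j, \sum_i M' i j = t - lam.
  move=> j; rewrite /M' sumrB hc; congr (_ - _).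
  rewrite (reindex_inj (@perm_inj _ s^-1)) /= -big_mkcond /=.
  rewrite (eq_bigl (fun i => i == j)); first by rewrite big_pred1_eq.
  by move=> i; rewrite permKV eq_sym.
have hn' : (#|supp M'| <= n)%N.
  have sub : supp M' \subset supp M :\ (i0, s i0).
    apply/fintype.subsetP => [[i j]]; rewrite !inE /= => nz; apply/andP; split.
      apply: contra nz => /eqP [-> ->]; by rewrite /M' eqxx subrr.
    apply: contra nz => /eqP M0; apply/eqP; apply: le_anti; rewrite hM' andbT /M' M0.
    case: ifP => _; rewrite ?subr0 // sub0r oppr_le0; exact: ltW.
  have := subset_leq_card sub.
  have := cardsD1 (i0, s i0) (supp M).
  rewrite inE /= sE /= => h1 h2; apply: leq_trans h2 _; by rewrite -ltnS -add1n -h1.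
have [s' hs'] := IH M' (t - lam) hn' hM' hr' hc'.
have split_sum : \sum_i \sum_j M i j * C i j =
  \sum_i \sum_j M' i j * C i j + lam * \sum_i C i (s i).
  rewrite mulr_sumr -big_split /=; apply: eq_bigr => i _.
  have -> : \sum_j M i j * C i j = \sum_j (M' i j * C i j + (if j == s i then lam else 0) * C i j).
    by apply: eq_bigr => j _; rewrite /M' mulrBl subrK.
  rewrite big_split /=; congr (_ + _).
  rewrite (eq_bigr (fun j => if j == s i then lam * C i j else 0)).
    by rewrite -big_mkcond big_pred1_eq.
  by move=> j _; case: ifP; rewrite ?mul0r.
have tl : 0 <= t - lam by rewrite -(hr' j0) sumr_ge0.
set a := \sum_i C i (s i) in split_sum *.
set b := \sum_i C i (s' i) in hs'.
have [ab|ba] := lerP a b.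
  exists s; rewrite split_sum -/a.
  have : (t - lam) * a <= (t - lam) * b by rewrite ler_wpM2l.
  lra.
exists s'; rewrite split_sum -/b.
have : lam * b <= lam * a by rewrite ler_wpM2l // ltW.
lra.
Qed.

Section Aux.
Variable R : realType.
Variable T : finType.

Lemma sum_ind (I : finType) (c : I) (F : I -> R) :
  \sum_y ((c == y)%:R * F y) = F c.
Proof.
rewrite (bigD1 c) //= eqxx mul1r big1 ?addr0 // => y /negbTE.
by rewrite eq_sym => ->; rewrite mul0r.
Qed.

Lemma sum_eq1 (I : finType) (c : I) : \sum_y ((c == y)%:R : R) = 1.
Proof. by rewrite -[RHS](sum_ind c (fun _ => 1)); apply: eq_bigr => y _; rewrite mulr1. Qed.

Lemma le_sum1 (I : finType) (F : I -> R) a : (forall x, 0 <= F x) -> F a <= \sum_x F x.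
Proof. by move=> h; rewrite (bigD1 a) //= lerDl sumr_ge0. Qed.

Definition cnt k (U : kset T k) (x : T) : R := \sum_i ((U i == x)%:R).

Lemma DkE k (U : kset T k) x : Dk U x = cnt U x / k%:R.
Proof.
rewrite /Dk /cnt; congr (_ / _).
rewrite -sum1_card natr_sum big_mkcond /=; apply: eq_bigr => i _.
by rewrite inE; case: eqP.
Qed.

Lemma partition_sum k (V : kset T k) (F : T -> R) :
  \sum_j F (V j) = \sum_y cnt V y * F y.
Proof.
rewrite (eq_bigr (fun j => \sum_y (V j == y)%:R * F y)); last by move=> j _; rewrite sum_ind.
rewrite exchange_big /=; apply: eq_bigr => y _; by rewrite /cnt mulr_suml.
Qed.

Lemma cnt_ge0 k (V : kset T k) y : 0 <= cnt V y.
Proof. by rewrite sumr_ge0. Qed.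

Lemma cnt_pos k (V : kset T k) j : 0 < cnt V (V j).
Proof.
rewrite /cnt (bigD1 j) //= eqxx ltr_pwDl // sumr_ge0 // => i _; exact: ler0n.
Qed.

End Aux.
Arguments cnt {R T k}.

Section Aux2.
Variable R : realType.
Variable T : finType.
Variable d : T -> T -> R.
Hypothesis dge0 : forall x y, 0 <= d x y.

Definition cost (g : T -> T -> R) := \sum_x \sum_y g x y * d x y.

Lemma cost_ge0 g : (forall x y, 0 <= g x y) -> 0 <= cost g.
Proof. by move=> h; apply: sumr_ge0 => x _; apply: sumr_ge0 => y _; rewrite mulr_ge0. Qed.

Lemma dW_le mu nu g : coupling mu nu g -> dW d mu nu <= cost g.
Proof.
move=> cg; apply: ge_inf; last by exists g.
exists 0 => c [g' [[g'0 _ _] ->]]; exact: cost_ge0.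
Qed.

Lemma dW_ge mu nu (x : R) : (exists g, coupling mu nu g) ->
  (forall g, coupling mu nu g -> x <= cost g) -> x <= dW d mu nu.
Proof.
move=> [g cg] h; apply: lb_le_inf.
  by exists (cost g), g.
by move=> c [g' [cg' ->]]; exact: h.
Qed.

Lemma dk_le k (U V : kset T k) (s : 'S_k) : dk d U V <= \sum_i d (U i) (V (s i)).
Proof.
apply: ge_inf; last by exists s.
by exists 0 => c [s' ->]; apply: sumr_ge0.
Qed.

Lemma dk_att k (U V : kset T k) : exists s : 'S_k, dk d U V = \sum_i d (U i) (V (s i)).
Proof.
pose F (s : 'S_k) := \sum_i d (U i) (V (s i)).
pose s0 := [arg min_(s < 1%g) F s]%O.
have hmin : forall s, F s0 <= F s.
  rewrite /s0; case: Order.TotalTheory.arg_minP => // s _ h s'; exact: h.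
exists s0; apply: le_anti; rewrite dk_le /=.
apply: lb_le_inf; first by exists (F 1%g), 1%g.
by move=> c [s ->]; exact: hmin.
Qed.

Definition pcoup k (U V : kset T k) (s : 'S_k) (x y : T) : R :=
  (\sum_i ((U i == x)%:R * (V (s i) == y)%:R)) / k%:R.

Lemma pcoup_coupling k (U V : kset T k) s : coupling (Dk U) (Dk V) (pcoup U V s).
Proof.
split.
- move=> x y; rewrite /pcoup divr_ge0 // sumr_ge0 // => i _; exact: mulr_ge0.
- move=> x; rewrite DkE /pcoup -mulr_suml exchange_big /=; congr (_ / _).
  by apply: eq_bigr => i _; rewrite -mulr_sumr sum_eq1 mulr1.
- move=> y; rewrite DkE /pcoup -mulr_suml exchange_big /=; congr (_ / _).
  rewrite /cnt [RHS](reindex_inj (@perm_inj _ s)) /=.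
  by apply: eq_bigr => i _; rewrite -mulr_suml sum_eq1 mul1r.
Qed.

Lemma pcoup_cost k (U V : kset T k) s :
  cost (pcoup U V s) = (\sum_i d (U i) (V (s i))) / k%:R.
Proof.
rewrite /cost /pcoup.
rewrite (eq_bigr (fun x => (\sum_i (U i == x)%:R * \sum_y ((V (s i) == y)%:R * d x y)) / k%:R)).
  rewrite -mulr_suml exchange_big /=; congr (_ / _); apply: eq_bigr => i _.
  rewrite (eq_bigr (fun x => (U i == x)%:R * d x (V (s i)))); first by rewrite sum_ind.
  by move=> x _; rewrite sum_ind.
move=> x _; rewrite mulr_suml; rewrite (eq_bigr (fun y => \sum_i (U i == x)%:R * (V (s i) == y)%:R * d x y / k%:R)).
  by rewrite exchange_big /=; apply: eq_bigr => i _; rewrite mulr_sumr mulr_suml; apply: eq_bigr => y _; ring.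
by move=> y _; rewrite mulr_suml mulr_suml; apply: eq_bigr => i _; ring.
Qed.

Lemma mix_coupling (I : finType) (w : I -> R) (mus nus : I -> T -> R) (gs : I -> T -> T -> R)
  (mu nu : T -> R) :
  (forall Y, 0 <= w Y) -> (forall Y, coupling (mus Y) (nus Y) (gs Y)) ->
  (forall x, \sum_Y w Y * mus Y x = mu x) -> (forall y, \sum_Y w Y * nus Y y = nu y) ->
  coupling mu nu (fun x y => \sum_Y w Y * gs Y x y) /\
  cost (fun x y => \sum_Y w Y * gs Y x y) = \sum_Y w Y * cost (gs Y).
Proof.
move=> w0 cg hmu hnu; split; first split.
- move=> x y; apply: sumr_ge0 => Y _; apply: mulr_ge0 => //; by case: (cg Y).
- move=> x; rewrite -hmu exchange_big /=; apply: eq_bigr => Y _.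
  by rewrite -mulr_sumr; case: (cg Y) => _ -> _.
- move=> y; rewrite -hnu exchange_big /=; apply: eq_bigr => Y _.
  by rewrite -mulr_sumr; case: (cg Y) => _ _ ->.
rewrite /cost.
transitivity (\sum_x \sum_Y \sum_y w Y * (gs Y x y * d x y)).
  apply: eq_bigr => x _; rewrite exchange_big /=; apply: eq_bigr => y _.
  by rewrite mulr_suml; apply: eq_bigr => Y _; rewrite mulrA.
rewrite exchange_big /=; apply: eq_bigr => Y _; rewrite mulr_sumr; apply: eq_bigr => x _.
by rewrite mulr_sumr.
Qed.

End Aux2.

Section Aux3.
Variable R : realType.
Variable T : finType.
Variable d : T -> T -> R.
Hypothesis dtri : forall x y z, d x z <= d x y + d y z.

Lemma cancelc (c a : R) : (c = 0 -> a = 0) -> c * (a / c) = a.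
Proof.
move=> h; have [c0|cn0] := eqVneq c 0; first by rewrite h // c0 mul0r.
by rewrite mulrC divfK.
Qed.

Lemma glue (mu pi nu : T -> R) g1 g2 : coupling mu pi g1 -> coupling pi nu g2 ->
  exists h, coupling mu nu h /\ cost d h <= cost d g1 + cost d g2.
Proof.
move=> [g10 g1r g1c] [g20 g2r g2c].
pose q y := if pi y == 0 then 0 else (pi y)^-1.
have F1 : forall x y, g1 x y * (pi y * q y) = g1 x y.
  move=> x y; rewrite /q; case: eqP => [p0|/eqP pn0]; last by rewrite mulfV // mulr1.
  have : g1 x y <= pi y by rewrite -g1c le_sum1.
  by rewrite p0 !mulr0 => h; apply/eqP; rewrite eq_sym eq_le h g10.
have F2 : forall y z, g2 y z * (pi y * q y) = g2 y z.
  move=> y z; rewrite /q; case: eqP => [p0|/eqP pn0]; last by rewrite mulfV // mulr1.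
  have : g2 y z <= pi y by rewrite -g2r le_sum1.
  by rewrite p0 !mulr0 => h; apply/eqP; rewrite eq_sym eq_le h g20.
have q0 : forall y, 0 <= q y.
  move=> y; rewrite /q; case: eqP => // _; rewrite invr_ge0 -g1c sumr_ge0 //.
exists (fun x z => \sum_y g1 x y * g2 y z * q y); split; first split.
- move=> x z; apply: sumr_ge0 => y _; rewrite !mulr_ge0 //.
- move=> x; rewrite -g1r exchange_big /=; apply: eq_bigr => y _.
  rewrite -[RHS](F1 x y) -g2r mulr_suml mulr_sumr; apply: eq_bigr => z _; ring.
- move=> z; rewrite -g2c exchange_big /=; apply: eq_bigr => y _.
  rewrite -[RHS](F2 y z) -g1c mulr_suml mulr_sumr; apply: eq_bigr => x _; ring.
rewrite /cost.
have step : \sum_x \sum_z (\sum_y g1 x y * g2 y z * q y) * d x z <=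
    \sum_x \sum_z \sum_y (g1 x y * g2 y z * q y * d x y + g1 x y * g2 y z * q y * d y z).
  apply: ler_sum => x _; apply: ler_sum => z _; rewrite mulr_suml; apply: ler_sum => y _.
  by rewrite -mulrDr ler_wpM2l // !mulr_ge0.
apply: (le_trans step).
under eq_bigr => x _ do under eq_bigr => z _ do rewrite big_split.
under eq_bigr => x _ do rewrite big_split.
rewrite big_split /=; apply: lerD; rewrite le_eqVlt; apply/orP; left; apply/eqP.
  apply: eq_bigr => x _; rewrite exchange_big /=; apply: eq_bigr => y _.
  rewrite -[X in _ = X * _](F1 x y) -g2r mulr_suml mulr_sumr mulr_suml; apply: eq_bigr => z _; ring.
rewrite exchange_big /= [RHS]exchange_big /=; apply: eq_bigr => z _.
rewrite exchange_big /=; apply: eq_bigr => y _.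
rewrite -[X in _ = X * _](F2 y z) -g1c mulr_suml mulr_sumr mulr_suml; apply: eq_bigr => x _; ring.
Qed.

End Aux3.

Section Aux4.
Variable R : realType.
Variable T : finType.
Variable d : T -> T -> R.
Hypothesis dge0 : forall x y, 0 <= d x y.

Lemma dk_le_cost k (hk : (0 < k)%N) (U V : kset T k) g :
  coupling (Dk U) (Dk V) g -> dk d U V <= k%:R * cost d g.
Proof.
move=> [g0 gr gc].
have kn0 : k%:R != 0 :> R by rewrite pnatr_eq0 -lt0n.
have gz1 : forall x y : T, cnt V y = 0 :> R -> g x y = 0.
  move=> x y c0; have : g x y <= Dk V y by rewrite -gc le_sum1.
  by rewrite DkE c0 mul0r => h; apply/eqP; rewrite eq_le h g0.
have gz2 : forall x y : T, cnt U x = 0 :> R -> g x y = 0.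
  move=> x y c0; have : g x y <= Dk U x by rewrite -gr le_sum1.
  by rewrite DkE c0 mul0r => h; apply/eqP; rewrite eq_le h g0.
pose M i j := g (U i) (V j) / cnt V (V j) / cnt U (U i).
have hM : forall i j, 0 <= M i j.
  by move=> i j; rewrite /M !divr_ge0 // cnt_ge0.
have hr : forall i, \sum_j M i j = k%:R^-1.
  move=> i; rewrite /M -mulr_suml.
  rewrite (partition_sum V (fun y => g (U i) y / cnt V y)).
  rewrite (eq_bigr (fun y => g (U i) y)); last by move=> y _; rewrite cancelc // => /gz1; apply.
  rewrite gr DkE mulrAC divff ?mul1r //; apply: lt0r_neq0; exact: cnt_pos.
have hc : forall j, \sum_i M i j = k%:R^-1.
  move=> j; rewrite /M.
  rewrite (partition_sum U (fun x => g x (V j) / cnt V (V j) / cnt U x)).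
  rewrite (eq_bigr (fun x => g x (V j) / cnt V (V j))); last first.
    move=> x _; rewrite cancelc // => /(gz2 x (V j)) ->; by rewrite !mul0r.
  rewrite -mulr_suml gc DkE mulrAC divff ?mul1r //; apply: lt0r_neq0; exact: cnt_pos.
have hcost : \sum_i \sum_j M i j * d (U i) (V j) = cost d g.
  transitivity (\sum_i \sum_y g (U i) y * d (U i) y / cnt U (U i)).
    apply: eq_bigr => i _.
    rewrite (partition_sum V (fun y => g (U i) y / cnt V y / cnt U (U i) * d (U i) y)).
    apply: eq_bigr => y _.
    have [c0|cn0] := eqVneq (cnt V y : R) 0; first by rewrite gz1 // !(mul0r, mulr0).
    have cu0 : cnt U (U i) != 0 :> R by apply: lt0r_neq0; exact: cnt_pos.
    by field; rewrite cn0 cu0.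


  rewrite exchange_big /= /cost [RHS]exchange_big /=; apply: eq_bigr => y _.
  rewrite (partition_sum U (fun x => g x y * d x y / cnt U x)).
  apply: eq_bigr => x _; rewrite cancelc // => /(gz2 x y) ->; by rewrite mul0r.
have [s hs] := birk (Ordinal hk) (fun i j => d (U i) (V j)) (leqnn _) hM hr hc.
apply: (le_trans (dk_le dge0 U V s)).
rewrite -hcost; have := ler_wpM2l (ler0n R k) hs.
by rewrite mulrA divff // mul1r.
Qed.

End Aux4.

Section Aux5.
Variable R : realType.
Variable T : finType.
Variable d : T -> T -> R.
Hypothesis dge0 : forall x y, 0 <= d x y.
Hypothesis dsym : forall x y, d x y = d y x.
Hypothesis dtri : forall x y z, d x z <= d x y + d y z.

Definition sopt k (U V : kset T k) : 'S_k :=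
  [arg min_(s < (1%g : 'S_k)) \sum_i d (U i) (V (s i))]%O.

Lemma dk_sopt k (U V : kset T k) : dk d U V = \sum_i d (U i) (V (sopt U V i)).
Proof.
pose F (s : 'S_k) := \sum_i d (U i) (V (s i)).
have hmin : forall s, F (sopt U V) <= F s.
  rewrite /sopt; case: Order.TotalTheory.arg_minP => // s _ h s'; exact: h.
apply: le_anti; rewrite dk_le //=.
apply: lb_le_inf; first by exists (F 1%g), 1%g.
by move=> c [s ->]; exact: hmin.
Qed.

Lemma dk_tri k (O X Y : kset T k) : dk d Y X <= dk d O Y + dk d O X.
Proof.
pose s1 := sopt O Y; pose s2 := sopt O X.
apply: (le_trans (dk_le dge0 Y X (s1^-1 * s2)%g)).
rewrite (reindex_inj (@perm_inj _ s1)) /= !dk_sopt -/s1 -/s2 -big_split /=.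
apply: ler_sum => j _; rewrite permM permK [d (O j) (Y _)]dsym; exact: dtri.
Qed.

Variable P : T -> R.
Hypothesis P0 : forall x, 0 <= P x.
Hypothesis P1 : \sum_x P x = 1.
Variable k : nat.

Definition w (X : kset T k) : R := \prod_(i < k) P (X i).

Lemma w0 X : 0 <= w X.
Proof. by rewrite /w prodr_ge0. Qed.

Lemma w1 : \sum_(X : kset T k) w X = 1.
Proof.
rewrite /w /kset -(bigA_distr_bigA (fun (i : 'I_k) (x : T) => P x)) /=.
by rewrite big1 // => i _; rewrite P1.
Qed.

Lemma w2 y (hk : (0 < k)%N) : \sum_(X : kset T k) w X * Dk X y = P y.
Proof.
have marg : forall i, \sum_(X : kset T k) w X * (X i == y)%:R = P y.
  move=> i.
  pose F (j : 'I_k) (x : T) := P x * (if j == i then (y == x)%:R else 1).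
  have := bigA_distr_bigA F; rewrite /= => e.
  rewrite /kset (eq_bigr (fun X : {ffun 'I_k -> T} => \prod_j F j (X j))); last first.
    move=> X _; rewrite /F big_split /= -big_mkcond /= big_pred1_eq /w eq_sym.
    by [].
  rewrite -e (bigD1 i) //= [X in _ * X]big1; last by move=> j /negbTE ji; rewrite /F ji (eq_bigr P) ?P1 // => x _; rewrite mulr1.
  rewrite mulr1 /F eqxx (eq_bigr (fun x => (y == x)%:R * P x)); first by rewrite sum_ind.
  by move=> x _; rewrite mulrC.
have kn0 : k%:R != 0 :> R by rewrite pnatr_eq0 -lt0n.
transitivity ((\sum_i \sum_(X : kset T k) w X * (X i == y)%:R) / k%:R).
  rewrite exchange_big /= mulr_suml; apply: eq_bigr => X _.
  by rewrite DkE /cnt -mulr_sumr mulrA.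
rewrite (eq_bigr (fun _ => P y)) // sumr_const card_ord -[P y *+ k]mulr_natr.
by rewrite -mulrA divff // mulr1.
Qed.

End Aux5.

Unset Implicit Arguments. Set Strict Implicit.

Theorem theorem5 (R : realType) (T : finType) (d : T -> T -> R) (P : T -> R)
  (k : nat) (O S : kset T k) (rho : R) :
  is_metric d -> is_prob P -> (1 <= k)%N ->
  (forall U : kset T k, kRP_cost d P O <= kRP_cost d P U) ->
  1 <= rho ->
  (forall U : kset T k, dW d (Dk S) P <= rho * dW d (Dk U) P) ->
  kRP_cost d P S <= (rho + 2) * kRP_cost d P O.
Proof.
move=> [dge0 dzero dsym dtri] [P0 P1] hk hO hrho hS.
have kn0 : k%:R != 0 :> R by rewrite pnatr_eq0 -lt0n.
have kpos : 0 < k%:R :> R by rewrite ltr0n.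
have costE : forall U, kRP_cost d P U = \sum_X w P X * dk d U X by [].
set costO := kRP_cost d P O.
pose G (X : kset T k) := \sum_Y w P Y * dk d Y X.
have mixP : forall U : kset T k, exists g, coupling P (Dk U) g /\ cost d g = G U / k%:R.
  move=> U.
  have [c e] := @mix_coupling R T d {ffun 'I_k -> T} (@w R T P k) (fun Y => Dk Y) (fun _ => Dk U)
    (fun Y => pcoup R Y U (sopt d Y U)) P (Dk U) (@w0 R T P P0 k) (fun Y => pcoup_coupling R Y U _)
    (fun x => w2 P1 x hk) (fun y => ltac:(by rewrite -mulr_suml w1 // mul1r)).
  exists (fun x y => \sum_Y w P Y * pcoup R Y U (sopt d Y U) x y); split => //.
  rewrite e /G mulr_suml; apply: eq_bigr => Y _.
  by rewrite pcoup_cost -(dk_sopt dge0) mulrA.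
have mixO : exists g, coupling (Dk O) P g /\ cost d g = costO / k%:R.
  have [c e] := @mix_coupling R T d {ffun 'I_k -> T} (@w R T P k) (fun _ => Dk O) (fun X => Dk X)
    (fun X => pcoup R O X (sopt d O X)) (Dk O) P (@w0 R T P P0 k) (fun X => pcoup_coupling R O X _)
    (fun x => ltac:(by rewrite -mulr_suml w1 // mul1r)) (fun y => w2 P1 y hk).
  exists (fun x y => \sum_X w P X * pcoup R O X (sopt d O X) x y); split => //.
  rewrite e /costO costE mulr_suml; apply: eq_bigr => X _.
  by rewrite pcoup_cost -(dk_sopt dge0) mulrA.
have step2 : k%:R * dW d (Dk S) P <= rho * costO.
  have [g [cg eg]] := mixO.
  have h1 := dW_le dge0 cg.
  have h2 := hS O.
  have r0 : 0 <= rho by apply: le_trans hrho; exact: ler01.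
  have : dW d (Dk S) P <= rho * (costO / k%:R).
    apply: (le_trans h2); apply: ler_wpM2l => //; by rewrite -eg.
  move=> h; have h' := ler_wpM2l (ler0n R k) h.
  have eq : k%:R * (rho * (costO / k%:R)) = rho * costO by field.
  by rewrite -eq.
have step1 : forall X, dk d S X <= k%:R * dW d (Dk S) P + G X.
  move=> X.
  have ne : exists g, coupling (Dk S) P g.
    have [g [cg _]] := mixO.
    have [h [ch _]] := glue dtri (pcoup_coupling R S O 1%g) cg.
    by exists h.
  have := @dW_ge R T d (Dk S) P ((dk d S X - G X) / k%:R) ne.
  have hyp : forall g, coupling (Dk S) P g -> (dk d S X - G X) / k%:R <= cost d g.
    move=> g cg.
    have [g2 [c2 e2]] := mixP X.
    have [h [ch eh]] := glue dtri cg c2.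
    have := dk_le_cost dge0 hk ch.
    move=> hh; rewrite mulrC ler_pdivrMl //.
    have : k%:R * cost d h <= k%:R * (cost d g + G X / k%:R) by apply: ler_wpM2l; [exact: ltW | rewrite -e2].
    rewrite mulrDr [k%:R * (G X / _)]mulrC divfK //.
    lra.
  move=> /(_ hyp) hd.
  move: hd; rewrite mulrC ler_pdivrMl //; lra.
have step3 : forall X, G X <= costO + dk d O X.
  move=> X; rewrite /G.
  apply: (le_trans (y := \sum_Y w P Y * (dk d O Y + dk d O X))).
    apply: ler_sum => Y _; apply: ler_wpM2l; first exact: w0.
    exact: dk_tri.
  rewrite (eq_bigr (fun Y => w P Y * dk d O Y + w P Y * dk d O X)); last by move=> Y _; rewrite mulrDr.
  by rewrite big_split /= -mulr_suml w1 // mul1r /costO costE.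
rewrite costE.
apply: (le_trans (y := \sum_X w P X * (k%:R * dW d (Dk S) P + costO + dk d O X))).
  apply: ler_sum => X _; apply: ler_wpM2l; first exact: w0.
  by rewrite -addrA; apply: (le_trans (step1 X)); rewrite lerD2l step3.
rewrite (eq_bigr (fun X => w P X * (k%:R * dW d (Dk S) P + costO) + w P X * dk d O X)); last first.
  by move=> X _; rewrite mulrDr.
rewrite big_split /= -mulr_suml w1 // mul1r -costE -/costO.
lra.
Qed.
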